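(* Take $\Omega=D=\mathbb{C}\setminus\{0,-1,-2,\dots\}$. For every $\delta>0$ there exists a Lebesgue measurable set $S\subseteq D$ with two-dimensional Lebesgue measure $\lambda(S)<\delta$ such that $\mathrm{Cl}_D(S)=D$.
   Context: Let $\Omega$ be either $(0,\infty)$ or $D=\mathbb{C}\setminus\{0,-1,-2,\dots\}$. An admissible instance (relative to $\Omega$) is one of the following finite lists of points, all entries of which are required to lie in $\Omega$: (i) $(z+1,\,z)$ for $z\in\Omega$ with $z+1\in\Omega$ (corresponding to the identity $\Gamma(z+1)=z\Gamma(z)$); (ii) $(z,\,1-z)$ for $z\in\Omega\setminus\mathbb{Z}$ with $1-z\in\Omega$ (corresponding to $\Gamma(z)\Gamma(1-z)=\pi/\sin(\pi z)$); (iii) for an integer $n\ge 2$, $\big(z,\,\tfrac{z}{n},\,\tfrac{z+1}{n},\dots,\tfrac{z+n-1}{n}\big)$ (corresponding to Gauss's multiplication formula $(2\pi)^{(n-1)/2}n^{1/2-z}\Gamma(z)=\prod_{j=0}^{n-1}\Gamma(\tfrac{z+j}{n})$). For $B\subseteq\Omega$, a point $p\in\Omega$ is obtained from $B$ in one step if there is an admissible instance in which $p$ occurs exactly once as an entry and every other entry lies in $B$. Set $B_0=B$, $B_{i+1}=B_i\cup\{p: p \text{ obtained from } B_i \text{ in one step}\}$, and $\mathrm{Cl}_\Omega(B)=\bigcup_{i\ge0}B_i$ (the set of points at which the value of $\Gamma$ is determined by its values on $B$ via finitely many applications of the identities). For $A,B\subseteq\Omega$ write $A\preceq B$ if $A\subseteq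 \mathrm{Cl}_\Omega(B)$. A set $S\subseteq\Omega$ is a fundamental set (for $\Gamma$ on $\Omega$) if $\mathrm{Cl}_\Omega(S)=\Omega$. *)

(* Defs.v *)
From HB Require Import structures.
From mathcomp Require Import all_boot all_algebra.
From mathcomp Require Import all_classical all_reals all_analysis.
From mathcomp Require Export complex.
Import GRing.Theory Num.Theory.

Set Implicit Arguments.
Unset Strict Implicit.
Unset Printing Implicit Defensive.

Local Open Scope ring_scope.
Local Open Scope classical_set_scope.

Section GammaClosure.
Variable R : realType.

Definition Dom : set R[i] := fun z => ~ (exists n : nat, z = - (n%:R)).

Definition is_int_C (z : R[i]) : Prop := exists k : int, z = k%:~R.

Inductive admissible (Omega : set R[i]) : seq R[i] -> Prop :=
  | adm_shift (z : R[i]) :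
      Omega z -> Omega (z + 1) -> admissible Omega [:: z + 1; z]
  | adm_reflect (z : R[i]) :
      Omega z -> ~ is_int_C z -> Omega (1 - z) -> admissible Omega [:: z; 1 - z]
  | adm_mult (n : nat) (z : R[i]) :
      (2 <= n)%N ->
      (forall q, q \in z :: [seq (z + j%:R) / n%:R | j <- iota 0 n] -> Omega q) ->
      admissible Omega (z :: [seq (z + j%:R) / n%:R | j <- iota 0 n]).

(* Cl_Omega(B): least set containing B and closed under "obtained in one step".
   This is the union of the iterates B_i of the paper. *)
Inductive Cl (Omega : set R[i]) (B : set R[i]) : R[i] -> Prop :=
  | Cl_base (p : R[i]) : B p -> Cl Omega B p
  | Cl_step (p : R[i]) (L : seq R[i]) :
      admissible Omega L ->
      count (pred1 p) L = 1%N ->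
      (forall q, q \in L -> q != p -> Cl Omega B q) ->
      Cl Omega B p.

Definition pts (S : set R[i]) : set (R * R) :=
  [set xy | S (xy.1 +i* xy.2)%C].

Definition lambda2 (S : set R[i]) : \bar R :=
  ((@lebesgue_measure R) \x (@lebesgue_measure R))%E (pts S).

End GammaClosure.

(* Main.v *)
Require Import Defs.
From mathcomp Require Import all_boot all_algebra.
From mathcomp Require Import all_classical all_reals all_analysis.
From mathcomp Require Import complex.
From mathcomp Require Import lra ring.
Import order.Order.TTheory GRing.Theory Num.Theory.
Local Open Scope ring_scope.
Local Open Scope classical_set_scope.

Section M.
Variable R : realType.
Implicit Types z w : R[i].

Lemma Re_nat n : complex.Re (n%:R : R[i]) = n%:R.
Proof. by rewrite raddfMn. Qed.
Lemma Im_nat n : complex.Im (n%:R : R[i]) = 0.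
Proof. by rewrite raddfMn /= mul0rn. Qed.

Lemma Dom_Im z : complex.Im z != 0 -> (@Dom R) z.
Proof. move=> h [n hn]; move: h; by rewrite hn raddfN /= Im_nat oppr0 eqxx. Qed.

Lemma Dom_Re z : 0 < complex.Re z -> (@Dom R) z.
Proof.
move=> h [n hn]; move: h; rewrite hn raddfN /= Re_nat => h; have := ler0n R n; lra.
Qed.

Lemma adm_in (Om : set R[i]) L q : admissible Om L -> q \in L -> Om q.
Proof.
case=> [z h1 h2|z h1 _ h2|n z _ h]; rewrite ?inE.
- by case/orP=> /eqP->.
- by case/orP=> /eqP->.
- exact: h.
Qed.

Lemma Cl_sub (B : set R[i]) p : B `<=` (@Dom R) -> Cl (@Dom R) B p -> (@Dom R) p.
Proof.
move=> hB; case=> [q /hB //|q L hL hc _].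
apply: (@adm_in _ L q hL); rewrite -has_pred1 has_count hc //.
Qed.

Lemma Cl_up B w : (@Dom R) w -> (@Dom R) (w + 1) -> Cl (@Dom R) B w -> Cl (@Dom R) B (w + 1).
Proof.
move=> h1 h2 h; apply: (@Cl_step _ _ _ _ [:: w + 1; w]).
- exact: adm_shift.
- rewrite /= eqxx /=.
  have -> : (w == w + 1) = false.
    by apply/negbTE; rewrite eq_sym -subr_eq0 addrC addKr oner_eq0.
  by [].
- move=> q; rewrite !inE => /orP [/eqP -> | /eqP -> _ //]; by rewrite eqxx.
Qed.

Lemma Cl_down B w : (@Dom R) w -> (@Dom R) (w + 1) -> Cl (@Dom R) B (w + 1) -> Cl (@Dom R) B w.
Proof.
move=> h1 h2 h; apply: (@Cl_step _ _ _ _ [:: w + 1; w]).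
- exact: adm_shift.
- rewrite /= eqxx /=.
  have -> : (w + 1 == w) = false.
    by apply/negbTE; rewrite -subr_eq0 addrC addKr oner_eq0.
  by [].
- move=> q; rewrite !inE => /orP [/eqP -> _ // | /eqP ->]; by rewrite eqxx.
Qed.

Definition SS (e : R) : set R[i] := fun z => 2^-1 <= complex.Re z <= 3/2 /\ `|complex.Im z| < e.

Lemma Dom_S z : (@Dom R) z -> (@Dom R) (z + 1).
Proof.
move=> h [n hn]; apply: h; exists n.+1.
by rewrite -natr1 opprD -hn addrK.
Qed.

Lemma Dom_P z : 1 < complex.Re z -> (@Dom R) (z - 1).
Proof.
move=> h [n hn]; move: h.
have -> : z = - n%:R + 1 by rewrite -hn subrK.
rewrite raddfD raddfN /= Re_nat => h; have := ler0n R n; lra.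
Qed.

Lemma ReB1 z : complex.Re (z - 1) = complex.Re z - 1.
Proof. by rewrite raddfB. Qed.
Lemma ImB1 z : complex.Im (z - 1) = complex.Im z.
Proof. by rewrite raddfB /= subr0. Qed.
Lemma ReD1 z : complex.Re (z + 1) = complex.Re z + 1.
Proof. by rewrite raddfD. Qed.
Lemma ImD1 z : complex.Im (z + 1) = complex.Im z.
Proof. by rewrite raddfD /= addr0. Qed.

Lemma strip_k e (k : nat) : forall z, (@Dom R) z -> `|complex.Im z| < e ->
  2^-1 - k%:R <= complex.Re z <= 3/2 + k%:R -> Cl (@Dom R) (SS e) z.
Proof.
elim: k => [|k IH] z hz hi.
  rewrite subr0 addr0 => hr; apply: Cl_base; by split.
move=> /andP [hr1 hr2].
have [h1|h1] := lerP (complex.Re z) (3/2 + k%:R).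
  have [h2|h2] := lerP (2^-1 - k%:R) (complex.Re z).
    by apply: IH => //; rewrite h1 h2.
  apply: Cl_down => //; first exact: Dom_S.
  apply: IH; first exact: Dom_S.
    by rewrite ImD1.
  rewrite ReD1; have := ler0n R k; move: hr1 h2 h1; rewrite -[k.+1%:R]natr1 => ? ? ? ?; apply/andP; split; lra.
have hz1 : (@Dom R) (z - 1) by apply: Dom_P; have := ler0n R k; lra.
rewrite -(subrK 1 z); apply: Cl_up => //; first by rewrite subrK.
apply: IH => //; first by rewrite ImB1.
rewrite ReB1; have := ler0n R k; move: hr1 hr2 h1; rewrite -[k.+1%:R]natr1 => ? ? ? ?; apply/andP; split; lra.
Qed.

Lemma strip e z : (@Dom R) z -> `|complex.Im z| < e -> Cl (@Dom R) (SS e) z.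
Proof.
move=> hz hi; apply: (@strip_k e (Num.bound (complex.Re z)).+1) => //.
rewrite -[(Num.bound _).+1%:R]natr1.
have h : `|complex.Re z| < (Num.bound (complex.Re z))%:R.
  have := archi_boundP (normr_ge0 (complex.Re z)).
  by rewrite /Num.bound normr_id.
set K := ((Num.bound _)%:R) in h *.
have h4 := ler_norm (complex.Re z).
have h3 : - complex.Re z <= `|complex.Re z| by rewrite -normrN ler_norm.
apply/andP; split; lra.
Qed.

Lemma Im_div z j n : (0 < n)%N ->
  complex.Im ((z + j%:R) / n%:R) * n%:R = complex.Im z.
Proof.
move=> n0.
have hn : (n%:R : R[i]) != 0 by rewrite pnatr_eq0 eqn0Ngt n0.
have : (z + j%:R) / n%:R * n%:R = z + j%:R by rewrite divfK.
move=> /(congr1 (@complex.Im R)).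
have ImD (x y : R[i]) : complex.Im (x + y) = complex.Im x + complex.Im y by case: x; case: y.
rewrite mulr_natr raddfMn ImD [complex.Im j%:R]Im_nat => h.
rewrite mulr_natr; exact: (etrans h (addr0 _)).
Qed.

Lemma map_fact z n q : (0 < n)%N ->
  q \in [seq (z + j%:R) / n%:R | j <- iota 0 n] ->
  `|complex.Im q| * n%:R = `|complex.Im z|.
Proof.
move=> n0 /mapP [j _ ->].
by rewrite -[X in _ * X]normr_nat -normrM Im_div.
Qed.

Lemma allD e z : 0 < e -> (@Dom R) z -> Cl (@Dom R) (SS e) z.
Proof.
move=> e0 hz.
have [hlt|hge] := ltrP `|complex.Im z| e; first exact: strip.
set n := (Num.bound (`|complex.Im z| / e)).+2.
have n0 : (0 < n)%N by [].
have hn2 : (2 <= n)%N by [].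
have hb : `|complex.Im z| < e * n%:R.
  have h := archi_boundP (divr_ge0 (normr_ge0 (complex.Im z)) (ltW e0)).
  rewrite ltr_pdivrMr // in h.
  have : (Num.bound (`|complex.Im z| / e))%:R <= n%:R :> R.
    rewrite ler_nat /n; exact: leq_trans (leqnSn _) (leqnSn _).
  move: ((Num.bound _)%:R) h => B h1 h2.
  have : B * e <= n%:R * e by rewrite ler_pM2r.
  by rewrite mulrC; lra.
have hnR : (2 : R) <= n%:R by rewrite (ler_nat R 2 n).
have key : forall q, q \in [seq (z + j%:R) / n%:R | j <- iota 0 n] ->
    [/\ (@Dom R) q, `|complex.Im q| < e & q != z].
  move=> q hq; have hm := @map_fact z n q n0 hq.
  split.
  - apply: Dom_Im; rewrite -normr_eq0; apply/eqP => h0.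
    by rewrite h0 mul0r in hm; lra.
  - have := normr_ge0 (complex.Im q); nra.
  - apply/eqP => hqz; rewrite hqz in hm.
    have := normr_ge0 (complex.Im z); nra.
apply: (@Cl_step _ _ _ _ (z :: [seq (z + j%:R) / n%:R | j <- iota 0 n])).
- apply: adm_mult => // q; rewrite inE => /orP [/eqP -> //| hq].
  by case: (key q hq).
- have c0 : count (pred1 z) [seq (z + j%:R) / n%:R | j <- iota 0 n] = 0%N.
    apply/count_memPn/negP => hz'.
    by case: (key z hz') => _ _; rewrite eqxx.
  change ((z == z) + count (pred1 z) [seq (z + j%:R) / n%:R | j <- iota 0 n] = 1)%N.
  by rewrite eqxx c0.
- move=> q; rewrite inE => /orP [/eqP -> | hq _]; first by rewrite eqxx.
  by case: (key q hq) => h1 h2 _; apply: strip.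
Qed.

Lemma ptsSS e : pts (SS e) = `[2^-1, 3/2]%classic `*` `](- e), e[%classic.
Proof.
apply/seteqP; split=> [[x y]|[x y]]; rewrite /pts /SS /=.
  by move=> [h1 h2]; split; rewrite /= in_itv /= ?h1 // -ltr_norml.
by move=> [/= h1 h2]; move: h1 h2; rewrite !in_itv /= => -> h2; split => //; rewrite ltr_norml.
Qed.

Lemma measSS e : measurable (pts (SS e)).
Proof. rewrite ptsSS; apply: measurableX; exact: measurable_itv. Qed.

Lemma lamSS e : 0 < e -> lambda2 (SS e) = (2 * e)%:E.
Proof.
move=> e0; rewrite /lambda2 ptsSS product_measure1E; [|exact: measurable_itv|exact: measurable_itv].
have h1 : (lebesgue_measure (`[2^-1%R, (3/2)%R]%classic : set R) = 1%:E)%E.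
  rewrite lebesgue_measure_itv /= lte_fin.
  rewrite ifT; last lra.
  rewrite -EFinD; congr EFin; by field.
have h2 : (lebesgue_measure (`](- e)%R, e[%classic : set R) = (2*e)%:E)%E.
  rewrite lebesgue_measure_itv /= lte_fin.
  rewrite ifT; last lra.
  rewrite -EFinD; congr EFin; lra.
rewrite [X in (X * _)%E](_ : _ = 1%:E); last exact: h1.
rewrite [X in (_ * X)%E](_ : _ = (2*e)%:E); last exact: h2.
by rewrite mul1e.
Qed.
End M.

Theorem mainTheorem10 (R : realType) (delta : R) :
  0 < delta ->
  exists S : set R[i],
    [/\ S `<=` @Dom R,
        measurable (pts S),
        (lambda2 S < delta%:E)%E
      & Cl (@Dom R) S = @Dom R].
Proof.
move=> d0; exists (@SS R (delta / 4)); split.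
- move=> z [/andP [h _] _]; apply: Dom_Re; lra.
- exact: measSS.
- rewrite lamSS; last lra.
  rewrite lte_fin; lra.
- apply/seteqP; split => z.
  + apply: Cl_sub => w [/andP [h _] _]; apply: Dom_Re; lra.
  + apply: (@allD R (delta / 4)); lra.
Qed.
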